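(* Let $G=(V,E)$ be an undirected graph (finite or infinite) and $M=M(S)$ a multiplex of $G$ generated by the simplex $S=(V_S,E_S)$. Then $M$ is maximal if and only if the set $\widetilde M$ of vertices spanned by $M$ is a ``strong'' partitive set of $G$.
   Context: A graph $G=(V,E)$ has vertex set $V$ and edge set $E\subseteq V^2$; it is undirected if $E$ is irreflexive and symmetric; $ab$ denotes $\{(a,b),(b,a)\}$. For a set $A$ of ordered pairs, $\widetilde A$ is the set of vertices $a$ with $(a,b)\in A$ or $(b,a)\in A$ for some $b$. A set $X\subseteq V$ is a partitive set of $G$ if for all $a,b\in X$ and $c\in V\setminus X$: $(a,c)\in E\Leftrightarrow(b,c)\in E$ and $(c,a)\in E\Leftrightarrow(c,b)\in E$; $I(G)$ is the class of partitive sets. A ``strong'' partitive set is an $X\in I(G)$ such that for every $Y\in I(G)$ with $X\cap Y\neq\emptyset$, $X\subseteq Y$ or $Y\subseteq X$. Implication classes: on $E$ define $(a,b)\Gamma(a',b')$ iff either $a=a'$ and $(b,b')\notin E$, or $b=b'$ and $(a,a')\notin E$; the classes of the transitive closure $\Gamma^*$ are the implication classes. For an implication class $A$, $A^{-1}=\{(b,a):(a,b)\in A\}$ and the color class is $\widehat A=A\cup A^{-1}$. A simplex of rank $r\ge1$ is a complete sub-graph $S=(V_S,E_S)$ of $G$ on $r+1$ vertices whose distinct undirected edges lie in distinct color classes; it is maximal if not properly contained in a larger simplex. The multiplex generated by $S$ is $M(S)=\bigcup\{\widehat A:\widehat A\text{ a color class},\ \widehat A\cap E_S\neq\emptyset\}$;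 the multiplex is maximal if $S$ is maximal. *)

(* Defs.v *)
From Stdlib Require Import List Relations.
Import ListNotations.

Section Gallai.
Context {V : Type}.
Variable E : V -> V -> Prop.

Definition undirected : Prop :=
  (forall a, ~ E a a) /\ (forall a b, E a b -> E b a).

Definition inE (p : V * V) : Prop := E (fst p) (snd p).

Definition partitive (X : V -> Prop) : Prop :=
  forall a b c, X a -> X b -> ~ X c ->
    (E a c <-> E b c) /\ (E c a <-> E c b).

Definition strong_partitive (X : V -> Prop) : Prop :=
  partitive X /\
  forall Y : V -> Prop, partitive Y -> (exists x, X x /\ Y x) ->
    (forall x, X x -> Y x) \/ (forall x, Y x -> X x).

Definition Gamma (p q : V * V) : Prop :=
  inE p /\ inE q /\
  ((fst p = fst q /\ ~ E (snd p) (snd q)) \/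
   (snd p = snd q /\ ~ E (fst p) (fst q))).

(* Gamma^*: transitive closure; its classes on E are the implication classes.
   Gamma is reflexive on E (E irreflexive), so the class of an edge e is
   {q | Gamma^* e q}. *)
Definition Gstar : V * V -> V * V -> Prop := clos_trans (V * V) Gamma.

Definition implication_class (e : V * V) (q : V * V) : Prop := Gstar e q.

Definition swap (p : V * V) : V * V := (snd p, fst p).

Definition color_class (e : V * V) (q : V * V) : Prop :=
  implication_class e q \/ implication_class e (swap q).

Definition same_set {T} (P Q : T -> Prop) : Prop := forall x, P x <-> Q x.

(* A simplex is given by its (finite) vertex set VS; its edge set E_S is
   all ordered pairs of distinct vertices of VS (it is complete). *)
Definition simplex_edge (VS : V -> Prop) (p : V * V) : Prop :=
  VS (fst p) /\ VS (snd p) /\ fst p <> snd p.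

Definition simplex (VS : V -> Prop) : Prop :=
  (exists l : list V, NoDup l /\ forall x, VS x <-> In x l) /\
  (* rank r >= 1, i.e. at least 2 vertices *)
  (exists a b, VS a /\ VS b /\ a <> b) /\
  (forall a b, VS a -> VS b -> a <> b -> E a b) /\
  (forall a b c d, VS a -> VS b -> VS c -> VS d -> a <> b -> c <> d ->
     ~ ((a = c /\ b = d) \/ (a = d /\ b = c)) ->
     ~ same_set (color_class (a, b)) (color_class (c, d))).

Definition maximal_simplex (VS : V -> Prop) : Prop :=
  simplex VS /\
  forall VS' : V -> Prop, simplex VS' -> (forall x, VS x -> VS' x) ->
    same_set VS VS'.

Definition multiplex (VS : V -> Prop) (q : V * V) : Prop :=
  exists e, inE e /\ color_class e q /\
    exists f, simplex_edge VS f /\ color_class e f.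

Definition maximal_multiplex (M : V * V -> Prop) : Prop :=
  exists VS, maximal_simplex VS /\ same_set M (multiplex VS).

Definition spanned (A : V * V -> Prop) (a : V) : Prop :=
  exists b, A (a, b) \/ A (b, a).

End Gallai.

(* Main.v *)
Require Import Defs.
From Stdlib Require Import List Relations Classical.
Import ListNotations.

Definition part1 {V} (E : V -> V -> Prop) (X : V -> Prop) :=
  forall a b c, X a -> X b -> ~ X c -> (E a c <-> E b c).

Lemma part1_iff V (E : V -> V -> Prop) (Hs : forall a b, E a b -> E b a) X :
  partitive E X <-> part1 E X.
Proof.
  split.
  - intros H a b c Ha Hb Hc. apply (H a b c Ha Hb Hc).
  - intros H a b c Ha Hb Hc. split. apply H; auto.
    split; intro h; apply Hs; apply Hs in h; revert h; apply H; auto.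
Qed.

Lemma Gamma_inE V (E : V -> V -> Prop) p q : Gamma E p q -> inE E p /\ inE E q.
Proof. intros [h1 [h2 _]]; auto. Qed.

Lemma Gstar_inE V (E : V -> V -> Prop) p q : Gstar E p q -> inE E p /\ inE E q.
Proof.
  induction 1 as [x y H|x y z _ IH1 _ IH2].
  - apply Gamma_inE; auto.
  - destruct IH1, IH2; auto.
Qed.

Lemma Gstar_refl V (E : V -> V -> Prop) (Hi : forall a, ~ E a a) p :
  inE E p -> Gstar E p p.
Proof. intro h. apply t_step. split; [exact h|]. split; [exact h|]. left; split; [reflexivity|apply Hi]. Qed.

Lemma Gamma_sym V (E : V -> V -> Prop) (Hs : forall a b, E a b -> E b a) p q :
  Gamma E p q -> Gamma E q p.
Proof.
  intros [h1 [h2 [[e n]|[e n]]]]; split; auto; split; auto.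
  left; split; auto; intro h; apply n, Hs; auto.
  right; split; auto; intro h; apply n, Hs; auto.
Qed.

Lemma Gstar_sym V (E : V -> V -> Prop) (Hs : forall a b, E a b -> E b a) p q :
  Gstar E p q -> Gstar E q p.
Proof.
  induction 1. apply t_step, Gamma_sym; auto. eapply t_trans; eauto.
Qed.

Lemma Gstar_trans V (E : V -> V -> Prop) p q r :
  Gstar E p q -> Gstar E q r -> Gstar E p r.
Proof. intros; eapply t_trans; eauto. Qed.

Lemma Gstar_swap V (E : V -> V -> Prop) (Hs : forall a b, E a b -> E b a) p q :
  Gstar E p q -> Gstar E (swap p) (swap q).
Proof.
  induction 1 as [x y H|x y z _ IH1 _ IH2].
  - apply t_step. destruct x as [a b], y as [c d].
    destruct H as [h1 [h2 [[e n]|[e n]]]]; unfold Gamma, inE, swap in *; simpl in *.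
    + split; [auto|]. split; [auto|]. right; auto.
    + split; [auto|]. split; [auto|]. left; auto.
  - eapply t_trans; eauto.
Qed.

Lemma swap_swap V (p : V * V) : swap (swap p) = p.
Proof. destruct p; reflexivity. Qed.

Lemma cc_same V (E : V -> V -> Prop) (Hs : forall a b, E a b -> E b a) p q :
  Gstar E p q -> same_set (color_class E p) (color_class E q).
Proof.
  intros H z; unfold color_class, implication_class; split; intros [h|h].
  - left; eapply Gstar_trans; [apply Gstar_sym|]; eauto.
  - right; eapply Gstar_trans; [apply Gstar_sym|]; eauto.
  - left; eapply Gstar_trans; eauto.
  - right; eapply Gstar_trans; eauto.
Qed.

Lemma cc_swap V (E : V -> V -> Prop) (Hs : forall a b, E a b -> E b a) p :
  same_set (color_class E p) (color_class E (swap p)).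
Proof.
  intros z; unfold color_class, implication_class; split; intros [h|h];
    apply (Gstar_swap _ _ Hs) in h; rewrite ?swap_swap in h; auto.
Qed.

Lemma cc_trans V (E : V -> V -> Prop) (Hs : forall a b, E a b -> E b a) e f q :
  color_class E e f -> color_class E e q -> color_class E f q.
Proof.
  intros [h|h] hq.
  - apply (cc_same _ _ Hs _ _ h); auto.
  - apply (cc_swap _ _ Hs f). apply (cc_same _ _ Hs _ _ h); auto.
Qed.

Lemma cc_self V (E : V -> V -> Prop) (Hi : forall a, ~ E a a) p :
  inE E p -> color_class E p p.
Proof. intro; left; apply Gstar_refl; auto. Qed.
Lemma mod_inv V (E : V -> V -> Prop) (Hs : forall a b, E a b -> E b a) Z (HZ : part1 E Z) p q :
  Gstar E p q -> Z (fst p) -> Z (snd p) -> Z (fst q) /\ Z (snd q).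
Proof.
  induction 1 as [[x y] [x' y'] H|x y z _ IH1 _ IH2]; intros h1 h2.
  - destruct H as [i1 [i2 [[e n]|[e n]]]]; unfold inE in *; simpl in *; subst.
    + split; auto. apply NNPP; intro hc. apply n. apply (HZ x' y y' h1 h2 hc); auto.
    + split; auto. apply NNPP; intro hc. apply n.
      apply (HZ y' x x' h2 h1 hc); auto.
  - destruct IH1; auto.
Qed.

Lemma span_cc_part V (E : V -> V -> Prop) (Hs : forall a b, E a b -> E b a)
  (Hi : forall a, ~ E a a) e :
  inE E e -> part1 E (spanned (color_class E e)).
Proof.
  intros he.
  assert (LF : forall c, ~ spanned (color_class E e) c -> forall q, Gstar E e q ->
            (E (fst q) c <-> E (snd q) c)).
  { intros c hc [x y] hq; simpl.
    destruct (Gstar_inE _ _ _ _ hq) as [_ hxy]; unfold inE in hxy; simpl in hxy.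
    split; intro h; apply NNPP; intro n; apply hc.
    - exists x. right. left. eapply t_trans; [exact hq|]. apply t_step.
      split; [exact hxy|]. split; [exact h|]. left; simpl; split; auto.
    - exists y. left. left. eapply t_trans; [exact hq|]. apply t_step.
      split; [exact hxy|]. split; [apply Hs; exact h|]. right; simpl; split; auto. }
  assert (K : forall c, ~ spanned (color_class E e) c -> forall p q, Gstar E p q ->
            Gstar E e p -> (E (fst p) c <-> E (fst q) c)).
  { intros c hc p q H; induction H as [[x y] [x' y'] H|x y z H1 IH1 H2 IH2]; intros hp.
    - destruct H as [i1 [i2 [[h n]|[h n]]]]; simpl in *; subst; [tauto|].
      assert (hq : Gstar E e (x', y')) by (eapply t_trans; [exact hp|]; apply t_step; split; auto; split; auto).
      pose proof (LF c hc _ hp) as A1; pose proof (LF c hc _ hq) as A2; simpl in *. tauto.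
    - rewrite IH1 by auto. apply IH2. eapply t_trans; eauto. }
  assert (W : forall c, ~ spanned (color_class E e) c -> forall w,
            spanned (color_class E e) w -> (E w c <-> E (fst e) c)).
  { intros c hc w [b [[h|h]|[h|h]]]; unfold implication_class, swap in h; simpl in h.
    all: pose proof (LF c hc _ h); pose proof (K c hc e _ h (Gstar_refl _ _ Hi _ he));
      simpl in *; tauto. }
  intros a b c ha hb hc. rewrite (W c hc a ha), (W c hc b hb). reflexivity.
Qed.

Lemma simplex_two V (E : V -> V -> Prop) VS t : simplex E VS -> VS t ->
  exists t', VS t' /\ t <> t'.
Proof.
  intros [_ [[a [b [ha [hb hab]]]] _]] ht.
  destruct (classic (t = a)); [subst; exists b; auto | exists a; auto].
Qed.

Lemma cc_sub_mult V (E : V -> V -> Prop) (Hi : forall a, ~ E a a) VS f q :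
  simplex_edge VS f -> inE E f -> color_class E f q -> multiplex E VS q.
Proof.
  intros hf hi hq. exists f. split; auto. split; auto. exists f. split; auto.
  apply cc_self; auto.
Qed.

Lemma mult_cc V (E : V -> V -> Prop) (Hs : forall a b, E a b -> E b a) VS q :
  multiplex E VS q -> exists f, simplex_edge VS f /\ inE E f /\ color_class E f q.
Proof.
  intros [e [he [heq [f [hf hef]]]]]. exists f. split; auto. split.
  - destruct hef as [h|h]; apply Gstar_inE in h; destruct h as [_ h]; auto.
    destruct f; unfold inE, swap in *; simpl in *; auto.
  - eapply cc_trans; eauto.
Qed.

Lemma spanned_ext V (A B : V * V -> Prop) : (forall q, A q -> B q) ->
  forall w, spanned A w -> spanned B w.
Proof. intros H w [b [h|h]]; exists b; auto. Qed.

Lemma in_span_cc V (E : V -> V -> Prop) (Hi : forall a, ~ E a a) f :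
  inE E f -> spanned (color_class E f) (fst f) /\ spanned (color_class E f) (snd f).
Proof.
  intros h; destruct f as [a b]; split; [exists b; left | exists a; right]; apply cc_self; auto.
Qed.

Lemma VS_in_X V (E : V -> V -> Prop) (Hi : forall a, ~ E a a) VS t :
  simplex E VS -> VS t -> spanned (multiplex E VS) t.
Proof.
  intros hS ht. destruct (simplex_two _ _ _ _ hS ht) as [t' [ht' hne]].
  destruct hS as [_ [_ [hcl _]]].
  exists t'. left. apply (cc_sub_mult _ _ Hi VS (t, t')).
  - split; simpl; auto.
  - unfold inE; simpl; auto.
  - apply cc_self; auto. unfold inE; simpl; auto.
Qed.

Lemma X_part V (E : V -> V -> Prop) (Hs : forall a b, E a b -> E b a)
  (Hi : forall a, ~ E a a) VS :
  simplex E VS -> part1 E (spanned (multiplex E VS)).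
Proof.
  intros hS.
  pose proof hS as [_ [[s0 [_ [hs0 _]]] [hcl _]]].
  assert (U : forall c, ~ spanned (multiplex E VS) c -> forall t, VS t -> (E t c <-> E s0 c)).
  { intros c hc t ht. destruct (classic (t = s0)) as [->|hne]; [tauto|].
    assert (hi : inE E (t, s0)) by (unfold inE; simpl; auto).
    destruct (in_span_cc _ _ Hi _ hi) as [h1 h2]; simpl in *.
    apply (span_cc_part _ _ Hs Hi _ hi); auto.
    intro hc'; apply hc. revert hc'. apply spanned_ext. intros q hq.
    apply (cc_sub_mult _ _ Hi VS (t, s0)); auto. split; simpl; auto. }
  assert (W : forall c, ~ spanned (multiplex E VS) c -> forall w,
     spanned (multiplex E VS) w -> (E w c <-> E s0 c)).
  { intros c hc w hw.
    assert (hw' : exists f, simplex_edge VS f /\ inE E f /\ spanned (color_class E f) w).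
    { destruct hw as [b [h|h]]; destruct (mult_cc _ _ Hs _ _ h) as [f [hf [hi hq]]];
        exists f; split; auto; split; auto; exists b; auto. }
    destruct hw' as [f [hf [hi hwf]]].
    rewrite <- (U c hc (fst f)) by (destruct hf; auto).
    apply (span_cc_part _ _ Hs Hi _ hi); auto.
    - apply (in_span_cc _ _ Hi _ hi).
    - intro hc'; apply hc. revert hc'. apply spanned_ext. intros q hq.
      apply (cc_sub_mult _ _ Hi VS f); auto. }
  intros a b c ha hb hc. rewrite (W c hc a ha), (W c hc b hb). reflexivity.
Qed.

Lemma X_sub_Z V (E : V -> V -> Prop) (Hs : forall a b, E a b -> E b a) VS Z :
  part1 E Z -> (forall t, VS t -> Z t) -> forall w, spanned (multiplex E VS) w -> Z w.
Proof.
  intros HZ hV w [b [h|h]]; destruct (mult_cc _ _ Hs _ _ h) as [[x y] [[hx [hy _]] [hi [hq|hq]]]];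
    simpl in *; destruct (mod_inv _ _ Hs Z HZ _ _ hq) as [z1 z2]; simpl in *; auto.
Qed.
Lemma claimC V (E : V -> V -> Prop) (Hs : forall a b, E a b -> E b a)
  (Hi : forall a, ~ E a a) VS t u c :
  simplex E VS -> VS t -> VS u -> VS c -> t <> u -> t <> c -> u <> c ->
  forall q, Gstar E (t, u) q -> fst q <> c /\ snd q <> c.
Proof.
  intros [_ [_ [hcl hd]]] ht hu hc htu htc huc.
  set (I := fun q : V * V => E (fst q) c /\ E (snd q) c /\ fst q <> c /\ snd q <> c /\
              Gstar E (t, c) (fst q, c) /\ Gstar E (u, c) (snd q, c)).
  assert (C1 : ~ Gstar E (t, u) (t, c)).
  { intro h. apply (hd t u t c); auto. intros [[_ ?]|[? _]]; auto.
    apply cc_same; auto. }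
  assert (C2 : ~ Gstar E (t, u) (c, u)).
  { intro h. apply (hd t u c u); auto. intros [[? _]|[? _]]; auto.
    apply cc_same; auto. }
  assert (base : I (t, u)).
  { unfold I; simpl. repeat split; auto; apply Gstar_refl; auto; unfold inE; simpl; auto. }
  assert (step : forall q q', Gstar E (t, u) q -> I q -> Gamma E q q' -> I q').
  { intros [x y] [x' y'] hq [h1 [h2 [h3 [h4 [h5 h6]]]]] hg; simpl in *.
    pose proof hg as [i1 [i2 [[e n]|[e n]]]]; unfold inE in *; simpl in *; subst.
    - destruct (classic (E y' c)) as [hy'|hy'].
      + unfold I; simpl. repeat split; auto.
        * intro; subst; auto.
        * eapply t_trans; [exact h6|]. apply t_step. split; [unfold inE; simpl; auto|].
          split; [unfold inE; simpl; auto|]. right; simpl; split; auto.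
      + exfalso. apply C1. eapply Gstar_trans; [|apply Gstar_sym; [exact Hs| exact h5]].
        eapply t_trans; [exact hq|]. eapply t_trans; [apply t_step; exact hg|].
        apply t_step. split; [exact i2|]. split; [unfold inE; simpl; auto|].
        left; simpl; split; auto.
    - destruct (classic (E x' c)) as [hx'|hx'].
      + unfold I; simpl. repeat split; auto.
        * intro; subst; auto.
        * eapply t_trans; [exact h5|]. apply t_step. split; [unfold inE; simpl; auto|].
          split; [unfold inE; simpl; auto|]. right; simpl; split; auto.
      + exfalso. apply C2.
        assert (hcy : Gstar E (t, u) (c, y')).
        { eapply t_trans; [exact hq|]. eapply t_trans; [apply t_step; exact hg|].
          apply t_step. split; [exact i2|]. split; [unfold inE; simpl; auto|].
          right; simpl; split; auto. }
        eapply Gstar_trans; [exact hcy|].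
        apply (Gstar_swap _ _ Hs (y', c) (u, c)). apply Gstar_sym; auto. }
  intros q hq.
  assert (Iq : I q).
  { apply clos_trans_tn1 in hq. induction hq as [q hg|q q' hg hq IH].
    - apply (step (t, u)); auto. apply Gstar_refl; auto. unfold inE; simpl; auto.
    - apply (step q); auto. apply clos_tn1_trans; auto. }
  destruct Iq as [_ [_ [? [? _]]]]; auto.
Qed.

Lemma claimC_span V (E : V -> V -> Prop) (Hs : forall a b, E a b -> E b a)
  (Hi : forall a, ~ E a a) VS t u c :
  simplex E VS -> VS t -> VS u -> VS c -> t <> u -> t <> c -> u <> c ->
  ~ spanned (color_class E (t, u)) c.
Proof.
  intros hS ht hu hc h1 h2 h3 [b [[h|h]|[h|h]]];
    destruct (claimC _ _ Hs Hi _ _ _ _ hS ht hu hc h1 h2 h3 _ h); simpl in *; auto.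
Qed.
Lemma back_dir V (E : V -> V -> Prop) (Hs : forall a b, E a b -> E b a)
  (Hi : forall a, ~ E a a) VS :
  simplex E VS -> strong_partitive E (spanned (multiplex E VS)) -> maximal_simplex E VS.
Proof.
  intros hS [_ hstr]. split; auto. intros VS' hS' hsub v. split; [apply hsub|]. intro hv'.
  apply NNPP; intro hv.
  pose proof hS as [_ [[s [_ [hs _]]] _]].
  assert (hsv : s <> v) by (intro; subst; auto).
  pose proof hS' as [_ [_ [hcl' _]]].
  assert (hi : inE E (s, v)) by (unfold inE; simpl; auto).
  destruct (in_span_cc _ _ Hi _ hi) as [hYs hYv]; simpl in *.
  assert (hY : partitive E (spanned (color_class E (s, v)))).
  { apply part1_iff; auto. apply span_cc_part; auto. }
  destruct (hstr _ hY) as [hXY|hYX].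
  - exists s; split; auto. apply VS_in_X; auto.
  - destruct (simplex_two _ _ _ _ hS hs) as [s' [hs' hne]].
    apply (claimC_span _ _ Hs Hi VS' s v s'); auto.
    + intro; subst; auto.
    + apply hXY. apply VS_in_X; auto.
  - destruct (hYX v hYv) as [b [h|h]]; destruct (mult_cc _ _ Hs _ _ h) as [[t u] [[ht [hu htu]] [_ hq]]];
      simpl in *;
      (apply (claimC_span _ _ Hs Hi VS' t u v); auto; [intro; subst; auto| intro; subst; auto|
        exists b; auto]).
Qed.
Lemma join_inv V (E : V -> V -> Prop) (Hs : forall a b, E a b -> E b a) (A B : V -> Prop) :
  (forall a b, A a -> B b -> E a b) -> part1 E (fun x => A x \/ B x) ->
  (forall x, A x -> B x -> False) ->
  forall a0 b0 z, Gstar E (a0, b0) z -> A a0 -> B b0 ->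
  A (fst z) /\ B (snd z) /\
  clos_refl_trans V (fun x y => A x /\ A y /\ ~ E x y) a0 (fst z).
Proof.
  intros HJ HM HD.
  assert (step : forall x y z, A x -> B y -> Gamma E (x, y) z ->
     A (fst z) /\ B (snd z) /\ (fst z = x \/ (A x /\ A (fst z) /\ ~ E x (fst z)))).
  { intros x y [x' y'] hx hy [i1 [i2 [[e n]|[e n]]]]; unfold inE in *; simpl in *; rewrite <- e in *.
    - assert (hAB : A y' \/ B y').
      { apply NNPP; intro hc. apply n. apply (HM x y y'); auto. }
      destruct hAB as [ha|hb]; [exfalso; apply n; apply Hs, HJ; auto|]. intuition.
    - assert (hAB : A x' \/ B x').
      { apply NNPP; intro hc. apply n. apply (HM y x x'); auto. }
      destruct hAB as [ha|hb]; [|exfalso; apply n; apply HJ; auto]. intuition. }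
  intros a0 b0 z hz ha hb. apply clos_trans_tn1 in hz.
  induction hz as [z hg|z z' hg hz IH].
  - destruct (step _ _ _ ha hb hg) as [h1 [h2 [h3|h3]]].
    + rewrite h3. split; auto. split; auto. apply rt_refl.
    + split; auto. split; auto. apply rt_step; simpl in *; tauto.
  - destruct IH as [h1 [h2 h3]]. destruct z as [x y]; simpl in *.
    destruct (step _ _ _ h1 h2 hg) as [k1 [k2 [k3|k3]]].
    + rewrite k3. auto.
    + split; auto. split; auto. eapply rt_trans; [exact h3|]. apply rt_step; auto.
Qed.

Lemma co_gstar V (E : V -> V -> Prop) (Hi : forall a, ~ E a a) (A : V -> Prop) t0 :
  (forall x, A x -> E x t0) -> forall x y,
  clos_refl_trans V (fun x y => A x /\ A y /\ ~ E x y) x y -> A x ->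
  Gstar E (x, t0) (y, t0).
Proof.
  intros HA x y h. apply clos_rt_rt1n in h. induction h as [x|x x1 y [h1 [h2 h3]] h IH]; intros hx.
  - apply Gstar_refl; auto. unfold inE; simpl; auto.
  - eapply t_trans; [|apply IH; auto]. apply t_step. split; [unfold inE; simpl; auto|].
    split; [unfold inE; simpl; auto|]. right; simpl; split; auto.
Qed.
Lemma fwd_dir V (E : V -> V -> Prop) (Hs : forall a b, E a b -> E b a)
  (Hi : forall a, ~ E a a) VS :
  maximal_simplex E VS -> strong_partitive E (spanned (multiplex E VS)).
Proof.
  intros [hS hmax].
  set (X := spanned (multiplex E VS)).
  assert (HX : part1 E X) by (apply X_part; auto).
  assert (HVX : forall t, VS t -> X t) by (intros; apply VS_in_X; auto).
  assert (Esym : forall a b, E a b <-> E b a) by (split; apply Hs).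
  split; [apply part1_iff; auto|].
  intros Y hY [p [hXp hYp]]. apply part1_iff in hY; auto.
  apply NNPP; intro hn. apply not_or_and in hn; destruct hn as [n1 n2].
  apply not_all_ex_not in n1; destruct n1 as [q n1].
  apply not_all_ex_not in n2; destruct n2 as [r n2].
  assert (hXq : X q) by tauto. assert (hYq : ~ Y q) by tauto.
  assert (hYr : Y r) by tauto. assert (hXr : ~ X r) by tauto. clear n1 n2.
  pose proof hS as [[l [hnd hl]] [htwo [hcl hd]]].
  set (d := E p r).
  assert (F1 : forall x y, X x -> Y x -> X y -> ~ Y y -> (E x y <-> d)).
  { intros x y h1 h2 h3 h4. rewrite (hY x r y), Esym, (HX y p r); auto; reflexivity. }
  assert (F2 : forall x y, X x -> Y x -> Y y -> ~ X y -> (E x y <-> d)).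
  { intros x y h1 h2 h3 h4. rewrite (HX x p y), (HX p q y), Esym, (hY y r q), Esym, (HX q p r);
      auto; reflexivity. }
  assert (F3 : forall x y, X x -> ~ Y x -> Y y -> ~ X y -> (E x y <-> d)).
  { intros x y h1 h2 h3 h4. rewrite (HX x p y); auto. }
  set (P := fun x => X x /\ Y x).
  set (Q := fun x => X x /\ ~ Y x).
  assert (HP : part1 E P).
  { intros a b c [ha1 ha2] [hb1 hb2] hc. destruct (classic (X c)) as [hxc|hxc].
    - apply hY; auto. intro; apply hc; split; auto.
    - apply HX; auto. }
  assert (HQ : part1 E Q).
  { intros a b c [ha1 ha2] [hb1 hb2] hc. destruct (classic (X c)) as [hxc|hxc].
    - assert (Y c) by (apply NNPP; intro; apply hc; split; auto).
      rewrite Esym, (F1 c a), Esym, (F1 c b); auto; reflexivity.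
    - apply HX; auto. }
  destruct (classic d) as [hdl|hdl].
  2:{ destruct htwo as [t [_ [ht _]]].
      destruct (classic (Y t)) as [hYt|hYt].
      - assert (sub : forall t', VS t' -> P t').
        { intros t' ht'. split; auto. apply NNPP; intro hn.
          assert (t <> t') by (intro; subst; auto).
          apply hdl, (F1 t t'); auto. }
        apply hYq. apply (X_sub_Z _ _ Hs VS P HP sub q hXq).
      - assert (sub : forall t', VS t' -> Q t').
        { intros t' ht'. split; auto. intro hn.
          assert (t' <> t) by (intro; subst; auto).
          apply hdl, (F1 t' t); auto. }
        apply (X_sub_Z _ _ Hs VS Q HQ sub p hXp); auto. }
  assert (Htp : exists tp, VS tp /\ Y tp).
  { apply NNPP; intro hn.
    assert (sub : forall t', VS t' -> Q t').
    { intros t' ht'. split; auto. intro; apply hn; exists t'; auto. }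
    apply (X_sub_Z _ _ Hs VS Q HQ sub p hXp); auto. }
  assert (Htq : exists tq, VS tq /\ ~ Y tq).
  { apply NNPP; intro hn.
    assert (sub : forall t', VS t' -> P t').
    { intros t' ht'. split; auto. apply NNPP; intro; apply hn; exists t'; auto. }
    apply hYq. apply (X_sub_Z _ _ Hs VS P HP sub q hXq). }
  destruct Htp as [tp [htp hYtp]]. destruct Htq as [tq [htq hYtq]].
  assert (Er : forall s, VS s -> E s r).
  { intros s hs. destruct (classic (Y s)).
    - apply (F2 s r); auto. - apply (F3 s r); auto. }
  set (R := fun x => Y x /\ ~ X x).
  assert (KR : forall s s', VS s -> VS s' -> s <> s' ->
            ~ Gstar E (s, r) (s', r) /\ ~ Gstar E (s, r) (r, s')).
  { intros s s' hs hs' hss'.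
    destruct (classic (Y s)) as [hYs|hYs].
    - assert (J := join_inv _ _ Hs P R).
      assert (J1 : forall a b, P a -> R b -> E a b).
      { intros a b [] []; apply (F2 a b); auto. }
      assert (J2 : part1 E (fun x => P x \/ R x)).
      { intros a b c ha hb hc. apply hY.
        - destruct ha as [[]|[]]; auto. - destruct hb as [[]|[]]; auto.
        - intro; apply hc. destruct (classic (X c)); [left|right]; split; auto. }
      assert (J3 : forall x, P x -> R x -> False) by (intros x [] []; auto).
      split; intro h; destruct (J J1 J2 J3 _ _ _ h) as [k1 [k2 k3]];
        try (split; auto); simpl in *.
      + apply (hd s tq s' tq); auto.
        * intro; subst; auto. * intro; subst; destruct k1; auto.
        * intros [[]|[]]; subst; auto.
        * apply cc_same; auto. apply (co_gstar _ _ Hi P); auto.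
          intros x []. apply (F1 x tq); auto.
          split; auto.
      + destruct k1; auto.
    - assert (J := join_inv _ _ Hs Q R).
      assert (J1 : forall a b, Q a -> R b -> E a b).
      { intros a b [] []; apply (F3 a b); auto. }
      assert (J2 : part1 E (fun x => Q x \/ R x)).
      { intros a b c ha hb hc. destruct (classic (X c)) as [hxc|hxc].
        - assert (Y c) by (apply NNPP; intro; apply hc; left; split; auto).
          assert (W : forall a, Q a \/ R a -> (E a c <-> d)).
          { intros a0 [[]|[]]; rewrite Esym; [apply F1|apply F2]; auto. }
          rewrite (W a), (W b); auto; try reflexivity.
        - assert (~ Y c) by (intro; apply hc; right; split; auto).
          assert (W : forall a, Q a \/ R a -> (E a c <-> E p c)).
          { intros a0 [[]|[]]; [apply HX|apply hY]; auto. }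
          rewrite (W a), (W b); auto; try reflexivity. }
      assert (J3 : forall x, Q x -> R x -> False) by (intros x [] []; auto).
      split; intro h; destruct (J J1 J2 J3 _ _ _ h) as [k1 [k2 k3]];
        try (split; auto); simpl in *.
      + apply (hd s tp s' tp); auto.
        * intro; subst; auto. * intro; subst; destruct k1; auto.
        * intros [[]|[]]; subst; auto.
        * apply cc_same; auto. apply (co_gstar _ _ Hi Q); auto.
          intros x []. apply Hs, (F1 tp x); auto.
          split; auto.
      + destruct k1; auto. }
  set (VS' := fun x => VS x \/ x = r).
  assert (hS' : simplex E VS').
  { assert (CL : forall a b, VS' a -> VS' b -> a <> b -> E a b).
    { intros a b [ha|ha] [hb|hb] hab; try (rewrite ha in *); try (rewrite hb in *); auto.
      congruence. }
    assert (KR' : forall s s' z, VS s -> VS s' -> s <> s' -> Gstar E (s, r) z ->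
              z = (s', r) \/ z = (r, s') -> False).
    { intros s s' z hs hs' hne h [->| ->]; destruct (KR s s' hs hs' hne); auto. }
    assert (KR'' : forall s s' z, VS s -> VS s' -> s <> s' -> Gstar E (r, s) z ->
              z = (r, s') \/ z = (s', r) -> False).
    { intros s s' z hs hs' hne h hz. apply (Gstar_swap _ _ Hs) in h.
      apply (KR' s s' (swap z)); auto. destruct hz as [->| ->]; auto. }
    split; [|split; [|split]].
    - exists (r :: l). split.
      + constructor; auto. intro hin. apply hXr, HVX, hl; auto.
      + intros x; unfold VS'; simpl; rewrite hl. split; intros [h|h]; auto.
    - destruct htwo as [a [b [ha [hb hab]]]]; exists a, b; unfold VS'; auto.
    - exact CL.
    - intros a b c0 d0 ha hb hc hd0 hab hcd hne hsame.
      assert (G : Gstar E (a, b) (c0, d0) \/ Gstar E (a, b) (d0, c0)).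
      { apply hsame. apply cc_self; auto. unfold inE; simpl; auto. }
      assert (G' : Gstar E (c0, d0) (a, b) \/ Gstar E (c0, d0) (b, a)).
      { apply hsame. apply cc_self; auto. unfold inE; simpl; auto. }
      destruct ha as [ha|ha], hb as [hb|hb], hc as [hc|hc], hd0 as [hd0|hd0];
        try (rewrite ha in *); try (rewrite hb in *); try (rewrite hc in *);
        try (rewrite hd0 in *); try congruence.
      + apply (hd a b c0 d0); auto.
      + destruct G as [h|h]; destruct (mod_inv _ _ Hs X HX _ _ h (HVX _ ha) (HVX _ hb));
          simpl in *; auto.
      + destruct G as [h|h]; destruct (mod_inv _ _ Hs X HX _ _ h (HVX _ ha) (HVX _ hb));
          simpl in *; auto.
      + destruct G' as [h|h]; destruct (mod_inv _ _ Hs X HX _ _ h (HVX _ hc) (HVX _ hd0));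
          simpl in *; auto.
      + destruct G as [h|h]; [apply (KR' a c0 _ ha hc) in h|apply (KR' a c0 _ ha hc) in h]; auto;
          intro; subst; auto.
      + destruct G as [h|h]; [apply (KR' a d0 _ ha hd0) in h|apply (KR' a d0 _ ha hd0) in h]; auto;
          intro; subst; auto.
      + destruct G' as [h|h]; destruct (mod_inv _ _ Hs X HX _ _ h (HVX _ hc) (HVX _ hd0));
          simpl in *; auto.
      + destruct G as [h|h]; [apply (KR'' b c0 _ hb hc) in h|apply (KR'' b c0 _ hb hc) in h]; auto;
          intro; subst; auto.
      + destruct G as [h|h]; [apply (KR'' b d0 _ hb hd0) in h|apply (KR'' b d0 _ hb hd0) in h]; auto;
          intro; subst; auto. }
  destruct (hmax VS' hS' (fun x h => or_introl h) r) as [_ h].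
  apply hXr, HVX, h. right; reflexivity.
Qed.
Lemma strong_ext V (E : V -> V -> Prop) (X X' : V -> Prop) :
  (forall w, X w <-> X' w) -> strong_partitive E X' -> strong_partitive E X.
Proof.
  intros H [hp hs]. split.
  - intros a b c ha hb hc. apply hp; [apply H; auto|apply H; auto|intro; apply hc, H; auto].
  - intros Y hY [x [hx hy]]. destruct (hs Y hY) as [h|h].
    + exists x; split; auto; apply H; auto.
    + left; intros; apply h, H; auto.
    + right; intros; apply H, h; auto.
Qed.

Theorem theorem3p9 (V : Type) (E : V -> V -> Prop) (VS : V -> Prop)
  (HG : undirected E) (HS : simplex E VS) :
  maximal_multiplex E (multiplex E VS) <->
  strong_partitive E (spanned (multiplex E VS)).
Proof.
  destruct HG as [Hi Hs]. split.
  - intros [VS' [hmax hsame]].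
    apply (strong_ext _ _ _ (spanned (multiplex E VS'))).
    + intros w; split; apply spanned_ext; intros q; apply hsame.
    + apply fwd_dir; auto.
  - intro h. exists VS. split; [apply back_dir; auto | intro; tauto].
Qed.
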